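(* Let $Q\subset\mathbb R^2$ be a polygonal set with center of mass $\overline{\mathbf x}_Q$, and let $\mathcal T^Q$ be a conforming triangulation of $Q$ into triangles, with set of triangles $\mathcal M^Q$ and set of boundary edges $\mathcal E^Q_{\rm ext}$ (edges lying on $\partial Q$). For each triangle $T$ let $\mathbf c_T$ be its circumcenter and $\overline{\mathbf x}_T$ its center of mass; for each edge $\sigma$ let $\mathbf a_1^\sigma,\mathbf a_2^\sigma$ be its endpoints. Then $$\sum_{T\in\mathcal M^Q}|T|(\mathbf c_T-\overline{\mathbf x}_T)=\sum_{\sigma\in\mathcal E^Q_{\rm ext}}|\sigma|\,\frac{|\mathbf a_1^\sigma-\overline{\mathbf x}_Q|^2+|\mathbf a_2^\sigma-\overline{\mathbf x}_Q|^2}{4}\,\mathbf n_{Q,\sigma},$$ where $\mathbf n_{Q,\sigma}$ is the unit outer normal to $Q$ on $\sigma$ and $|T|,|\sigma|$ are area and length.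
   Context: A conforming triangulation: triangles with pairwise disjoint interiors covering $Q$, any two of which intersect in empty set, a common vertex, or a common edge. *)

(* Defs.v *)
From HB Require Import structures.
From mathcomp Require Import all_boot all_order all_algebra.
Set Implicit Arguments. Unset Strict Implicit. Unset Printing Implicit Defensive.
Import Order.TTheory GRing.Theory Num.Theory.
Local Open Scope ring_scope.

Section Geom.
Variable R : rcfType.

Definition point := (R * R)%type.
Definition padd (p q : point) : point := (p.1 + q.1, p.2 + q.2).
Definition psub (p q : point) : point := (p.1 - q.1, p.2 - q.2).
Definition pscale (k : R) (p : point) : point := (k * p.1, k * p.2).
Definition pzero : point := (0, 0).
Definition dot (p q : point) : R := p.1 * q.1 + p.2 * q.2.
Definition nrm2 (p : point) : R := dot p p.
Definition nrm (p : point) : R := Num.sqrt (nrm2 p).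

Definition triangle := (point * point * point)%type.
Definition tA (T : triangle) : point := T.1.1.
Definition tB (T : triangle) : point := T.1.2.
Definition tC (T : triangle) : point := T.2.

Definition det2 (p q : point) : R := p.1 * q.2 - p.2 * q.1.
Definition sdet (T : triangle) : R := det2 (psub (tB T) (tA T)) (psub (tC T) (tA T)).
Definition nondegenerate (T : triangle) : Prop := sdet T != 0.
Definition tarea (T : triangle) : R := `|sdet T| / 2.
Definition tcentroid (T : triangle) : point :=
  pscale (3%:R)^-1 (padd (tA T) (padd (tB T) (tC T))).
Definition vertices (T : triangle) : seq point := [:: tA T; tB T; tC T].

Definition in_tri (T : triangle) (p : point) : Prop :=
  exists l1 l2 l3 : R, [/\ 0 <= l1, 0 <= l2, 0 <= l3, l1 + l2 + l3 = 1 &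
    p = padd (pscale l1 (tA T)) (padd (pscale l2 (tB T)) (pscale l3 (tC T)))].
Definition in_tri_int (T : triangle) (p : point) : Prop :=
  exists l1 l2 l3 : R, [/\ 0 < l1, 0 < l2, 0 < l3, l1 + l2 + l3 = 1 &
    p = padd (pscale l1 (tA T)) (padd (pscale l2 (tB T)) (pscale l3 (tC T)))].
Definition in_seg (a b p : point) : Prop :=
  exists t : R, [/\ 0 <= t, t <= 1 & p = padd (pscale (1 - t) a) (pscale t b)].

Definition good_intersection (T1 T2 : triangle) : Prop :=
  (forall p, ~ (in_tri T1 p /\ in_tri T2 p)) \/
  (exists v, [/\ v \in vertices T1, v \in vertices T2 &
      forall p, (in_tri T1 p /\ in_tri T2 p) <-> p = v]) \/
  (exists u v, [/\ u != v, (u \in vertices T1) && (v \in vertices T1),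
      (u \in vertices T2) && (v \in vertices T2) &
      forall p, (in_tri T1 p /\ in_tri T2 p) <-> in_seg u v p]).

Definition conforming (Tr : seq triangle) : Prop :=
  (forall T, T \in Tr -> nondegenerate T) /\
  (forall i j, (i < size Tr)%N -> (j < size Tr)%N -> i <> j ->
     let T1 := nth (pzero, pzero, pzero) Tr i in
     let T2 := nth (pzero, pzero, pzero) Tr j in
     (forall p, ~ (in_tri_int T1 p /\ in_tri_int T2 p)) /\
     good_intersection T1 T2).

Definition inQ (Tr : seq triangle) (p : point) : Prop :=
  exists2 T, T \in Tr & in_tri T p.

(* topological boundary of Q (Q is closed) *)
Definition on_boundary (Tr : seq triangle) (p : point) : Prop :=
  inQ Tr p /\ forall eps : R, 0 < eps ->
    exists q, nrm2 (psub q p) < eps /\ ~ inQ Tr q.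

Definition is_edge_of (T : triangle) (a b : point) : Prop :=
  [/\ a != b, a \in vertices T & b \in vertices T].

Definition boundary_edge (Tr : seq triangle) (a b : point) : Prop :=
  (exists2 T, T \in Tr & is_edge_of T a b) /\
  (forall p, in_seg a b p -> on_boundary Tr p).

(* E enumerates the set E^Q_ext of boundary edges, each unoriented edge
   exactly once (in one of its two orientations) *)
Definition enumerates_boundary_edges (Tr : seq triangle) (E : seq (point * point)) : Prop :=
  (forall e, e \in E -> boundary_edge Tr e.1 e.2) /\
  (forall a b, boundary_edge Tr a b ->
     count (fun e => (e == (a, b)) || (e == (b, a))) E = 1%N).

Definition unit_outer_normal (Tr : seq triangle) (a b n : point) : Prop :=
  [/\ nrm2 n = 1, dot n (psub b a) = 0 &
    exists2 delta : R, 0 < delta & forall t : R, 0 < t -> t < delta ->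
      ~ inQ Tr (padd (pscale (2%:R)^-1 (padd a b)) (pscale t n))].

Definition is_circumcenter (T : triangle) (c : point) : Prop :=
  nrm2 (psub (tA T) c) = nrm2 (psub (tB T) c) /\
  nrm2 (psub (tA T) c) = nrm2 (psub (tC T) c).

Definition psum (I : Type) (s : seq I) (F : I -> point) : point :=
  foldr (fun i acc => padd (F i) acc) pzero s.

Definition Qarea (Tr : seq triangle) : R := \sum_(T <- Tr) tarea T.
Definition Qcentroid (Tr : seq triangle) : point :=
  pscale (Qarea Tr)^-1 (psum Tr (fun T => pscale (tarea T) (tcentroid T))).

End Geom.

(* Main.v *)
Require Import Defs.
From HB Require Import structures.
From mathcomp Require Import all_boot all_order all_algebra.
From mathcomp Require Import ring lra.
Import Order.TTheory GRing.Theory Num.Theory.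
Local Open Scope ring_scope.

Set Implicit Arguments. Unset Strict Implicit. Unset Printing Implicit Defensive.

Section G.
Variable R : rcfType.
Implicit Types (p q u : point R) (t T : triangle R).

Lemma psumE (I : Type) (s : seq I) (F : I -> point R) : psum s F = \sum_(i <- s) F i.
Proof. elim: s => [|i s IH] /=; first by rewrite big_nil. by rewrite big_cons -IH. Qed.

Lemma pt_eq p q : p.1 = q.1 -> p.2 = q.2 -> p = q.
Proof. by case: p q => [? ?] [? ?] /= -> ->. Qed.

Definition rot t : triangle R := (tB t, tC t, tA t).
Definition swp t : triangle R := (tB t, tA t, tC t).
Definition posrot T : seq (triangle R) :=
  if 0 < sdet T then [:: T; rot T; rot (rot T)] else [:: swp T; swp (rot T); swp (rot (rot T))].
Definition edge t : point R * point R := (tA t, tB t).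
Definition flip (e : point R * point R) := (e.2, e.1).

Lemma sdet_rot t : sdet (rot t) = sdet t.
Proof. case: t => [[[a1 a2] [b1 b2]] [c1 c2]]; rewrite /sdet /det2 /=; ring. Qed.
Lemma sdet_swp t : sdet (swp t) = - sdet t.
Proof. case: t => [[[a1 a2] [b1 b2]] [c1 c2]]; rewrite /sdet /det2 /=; ring. Qed.

Lemma in_tri_rot t q : in_tri t q -> in_tri (rot t) q.
Proof.
case: t => [[A B] C] [l1 [l2 [l3 [h1 h2 h3 h4 ->]]]].
exists l2, l3, l1; split => //; first by lra.
apply: pt_eq; rewrite /rot /tA /tB /tC /= ; ring.
Qed.
Lemma in_tri_swp t q : in_tri t q -> in_tri (swp t) q.
Proof.
case: t => [[A B] C] [l1 [l2 [l3 [h1 h2 h3 h4 ->]]]].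
exists l2, l1, l3; split => //; first by lra.
apply: pt_eq; rewrite /swp /tA /tB /tC /= ; ring.
Qed.
Lemma in_tri_int_rot t q : in_tri_int t q -> in_tri_int (rot t) q.
Proof.
case: t => [[A B] C] [l1 [l2 [l3 [h1 h2 h3 h4 ->]]]].
exists l2, l3, l1; split => //; first by lra.
apply: pt_eq; rewrite /rot /tA /tB /tC /= ; ring.
Qed.
Lemma in_tri_int_swp t q : in_tri_int t q -> in_tri_int (swp t) q.
Proof.
case: t => [[A B] C] [l1 [l2 [l3 [h1 h2 h3 h4 ->]]]].
exists l2, l1, l3; split => //; first by lra.
apply: pt_eq; rewrite /swp /tA /tB /tC /= ; ring.
Qed.
Lemma rot3 t : rot (rot (rot t)) = t.
Proof. by case: t => [[A B] C]. Qed.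
Lemma swp2 t : swp (swp t) = t.
Proof. by case: t => [[A B] C]. Qed.

Definition Lb t q := det2 (psub q (tA t)) (psub (tC t) (tA t)).
Definition Lc t q := det2 (psub (tB t) (tA t)) (psub q (tA t)).
Definition La t q := sdet t - Lb t q - Lc t q.
Definition comb (l1 l2 l3 : R) t :=
  padd (pscale l1 (tA t)) (padd (pscale l2 (tB t)) (pscale l3 (tC t))).

Lemma L_comb t l1 l2 l3 : l1 + l2 + l3 = 1 ->
  [/\ La t (comb l1 l2 l3 t) = l1 * sdet t, Lb t (comb l1 l2 l3 t) = l2 * sdet t &
      Lc t (comb l1 l2 l3 t) = l3 * sdet t].
Proof.
move=> h; have -> : l1 = 1 - l2 - l3 by lra.
case: t => [[[a1 a2] [b1 b2]] [c1 c2]].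
rewrite /La /Lb /Lc /comb /sdet /det2 /psub /padd /pscale /tA /tB /tC /=.
split; ring.
Qed.

Lemma L_sum t q : q = comb (La t q / sdet t) (Lb t q / sdet t) (Lc t q / sdet t) t \/ sdet t = 0.
Proof.
have [->|h] := eqVneq (sdet t) 0; first by right.
left; move: h; case: t => [[[a1 a2] [b1 b2]] [c1 c2]]; case: q => [x y].
rewrite /La /Lb /Lc /comb /sdet /det2 /psub /padd /pscale /tA /tB /tC /= => h.
congr pair; field; exact: h.
Qed.

Lemma in_L t q : 0 < sdet t -> in_tri t q -> [/\ 0 <= La t q, 0 <= Lb t q & 0 <= Lc t q].
Proof.
move=> hD [l1 [l2 [l3 [h1 h2 h3 h4 ->]]]].
have [-> -> ->] := L_comb t h4. by split; apply: mulr_ge0 => //; apply: ltW.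
Qed.
Lemma in_int_L t q : 0 < sdet t -> in_tri_int t q -> [/\ 0 < La t q, 0 < Lb t q & 0 < Lc t q].
Proof.
move=> hD [l1 [l2 [l3 [h1 h2 h3 h4 ->]]]].
have [-> -> ->] := L_comb t h4. by split; apply: mulr_gt0.
Qed.
Lemma L_in t q : 0 < sdet t -> 0 <= La t q -> 0 <= Lb t q -> 0 <= Lc t q -> in_tri t q.
Proof.
move=> hD h1 h2 h3; case: (L_sum t q) => [E|]; last by move=> h; rewrite h ltxx in hD.
exists (La t q / sdet t), (Lb t q / sdet t), (Lc t q / sdet t); split => //.
- by apply: divr_ge0 => //; apply: ltW.
- by apply: divr_ge0 => //; apply: ltW.
- by apply: divr_ge0 => //; apply: ltW.
- rewrite /La; field; by rewrite gt_eqF.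
Qed.
Lemma L_in_int t q : 0 < sdet t -> 0 < La t q -> 0 < Lb t q -> 0 < Lc t q -> in_tri_int t q.
Proof.
move=> hD h1 h2 h3; case: (L_sum t q) => [E|]; last by move=> h; rewrite h ltxx in hD.
exists (La t q / sdet t), (Lb t q / sdet t), (Lc t q / sdet t); split => //.
- by apply: divr_gt0.
- by apply: divr_gt0.
- by apply: divr_gt0.
- rewrite /La; field; by rewrite gt_eqF.
Qed.

Definition sg2 (k : R) u w := padd (pscale (1 - k) u) (pscale k w).

Lemma L_aff t k u w :
  [/\ La t (sg2 k u w) = (1 - k) * La t u + k * La t w,
      Lb t (sg2 k u w) = (1 - k) * Lb t u + k * Lb t w &
      Lc t (sg2 k u w) = (1 - k) * Lc t u + k * Lc t w].
Proof.
case: t => [[[a1 a2] [b1 b2]] [c1 c2]]; case: u => [u1 u2]; case: w => [w1 w2].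
rewrite /sg2 /La /Lb /Lc /sdet /det2 /psub /padd /pscale /tA /tB /tC /=; split; ring.
Qed.

Lemma L_dir t p s u :
  [/\ La t (padd p (pscale s u)) = La t p + s * (La t (padd p u) - La t p),
      Lb t (padd p (pscale s u)) = Lb t p + s * (Lb t (padd p u) - Lb t p) &
      Lc t (padd p (pscale s u)) = Lc t p + s * (Lc t (padd p u) - Lc t p)].
Proof.
case: t => [[[a1 a2] [b1 b2]] [c1 c2]]; case: u => [u1 u2]; case: p => [w1 w2].
rewrite /La /Lb /Lc /sdet /det2 /psub /padd /pscale /tA /tB /tC /=; split; ring.
Qed.

Lemma L_vert t :
  [/\ [/\ La t (tA t) = sdet t, Lb t (tA t) = 0 & Lc t (tA t) = 0],
      [/\ La t (tB t) = 0, Lb t (tB t) = sdet t & Lc t (tB t) = 0] &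
      [/\ La t (tC t) = 0, Lb t (tC t) = 0 & Lc t (tC t) = sdet t]].
Proof.
case: t => [[[a1 a2] [b1 b2]] [c1 c2]].
rewrite /La /Lb /Lc /sdet /det2 /psub /padd /pscale /tA /tB /tC /=; split; split; ring.
Qed.

Definition same t T := [/\ forall q, in_tri t q <-> in_tri T q,
  forall q, in_tri_int t q <-> in_tri_int T q, vertices t =i vertices T &
  forall c, is_circumcenter T c -> is_circumcenter t c].

Lemma same_refl T : same T T.
Proof. by split. Qed.

Lemma same_rot t T : same t T -> same (rot t) T.
Proof.
case=> h1 h2 h3 h4; split.
- move=> q; split; last by move/h1/in_tri_rot.
  by move=> H; apply/h1; rewrite -(rot3 t); apply/in_tri_rot/in_tri_rot.
- move=> q; split; last by move/h2/in_tri_int_rot.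
  by move=> H; apply/h2; rewrite -(rot3 t); apply/in_tri_int_rot/in_tri_int_rot.
- move=> x; rewrite -h3 /vertices /rot /tA /tB /tC /= !inE.
  by case: (x == _); case: (x == _); case: (x == _).
- move=> c /h4; rewrite /is_circumcenter /rot /tA /tB /tC /= => -[-> ->]; by split.
Qed.

Lemma same_swp t T : same t T -> same (swp t) T.
Proof.
case=> h1 h2 h3 h4; split.
- move=> q; split; last by move/h1/in_tri_swp.
  by move=> H; apply/h1; rewrite -(swp2 t); apply/in_tri_swp.
- move=> q; split; last by move/h2/in_tri_int_swp.
  by move=> H; apply/h2; rewrite -(swp2 t); apply/in_tri_int_swp.
- move=> x; rewrite -h3 /vertices /swp /tA /tB /tC /= !inE.
  by case: (x == _); case: (x == _); case: (x == _).
- move=> c /h4; rewrite /is_circumcenter /swp /tA /tB /tC /= => -[<- ->]; by split.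
Qed.

Lemma posrot_same T t : t \in posrot T -> same t T.
Proof.
rewrite /posrot; case: ifP => _; rewrite !inE => /or3P [] /eqP ->;
 by repeat (apply: same_rot || apply: same_swp); apply: same_refl.
Qed.

Lemma posrot_sdet T t : sdet T != 0 -> t \in posrot T -> 0 < sdet t /\ `|sdet T| = sdet t.
Proof.
move=> hT; rewrite /posrot; case: ifP => hp; rewrite !inE => /or3P [] /eqP ->;
 rewrite ?sdet_swp ?sdet_rot.
- by rewrite gtr0_norm.
- by rewrite gtr0_norm.
- by rewrite gtr0_norm.
all: have hn : sdet T < 0 by rewrite lt_neqAle hT /= leNgt hp.
all: by rewrite ltr0_norm // oppr_gt0.
Qed.

Lemma sdet_distinct t : sdet t != 0 -> [/\ tA t != tB t, tB t != tC t & tC t != tA t].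
Proof.
case: t => [[[a1 a2] [b1 b2]] [c1 c2]]; rewrite /tA /tB /tC /= => h.
split; apply/eqP => -[E1 E2]; move/eqP: h; apply;
 rewrite /sdet /det2 /psub /tA /tB /tC /= ?E1 ?E2; ring.
Qed.

Lemma posrot_edge T a b : sdet T != 0 -> a != b -> a \in vertices T -> b \in vertices T ->
  exists2 t, t \in posrot T & edge t = (a, b) \/ edge t = (b, a).
Proof.
move=> hT hab; case: T hT => [[A B] C] hT.
rewrite /vertices /tA /tB /tC /= !inE => /or3P ha /or3P hb.
have m1 (x y z : triangle R) : x \in [:: x; y; z] by rewrite inE eqxx.
have m2 (x y z : triangle R) : y \in [:: x; y; z] by rewrite !inE eqxx orbT.
have m3 (x y z : triangle R) : z \in [:: x; y; z] by rewrite !inE eqxx !orbT.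
rewrite /posrot; case: ifP => _;
 case: ha => /eqP ?; case: hb => /eqP ?; subst; try by rewrite eqxx in hab.
all: first [ eexists; [apply: m1 | by [left|right]]
     | eexists; [apply: m2 | by [left|right]]
     | eexists; [apply: m3 | by [left|right]] ].
Qed.

Definition J (v : point R) : point R := (v.2, - v.1).
Definition Fx x (e : point R * point R) : point R :=
  pscale ((nrm2 (psub e.1 x) + nrm2 (psub e.2 x)) / 4%:R) (J (psub e.2 e.1)).

Lemma tri_id t c x : is_circumcenter t c ->
  padd (Fx x (edge t)) (padd (Fx x (edge (rot t))) (Fx x (edge (rot (rot t))))) =
  pscale (sdet t / 2%:R) (psub c x).
Proof.
case: t => [[A B] C]; rewrite /is_circumcenter /tA /tB /tC /= => -[e1 e2].
have key y : nrm2 (psub y x) = nrm2 (psub y c) + (2%:R * dot (psub y c) (psub c x) + nrm2 (psub c x)).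
  by rewrite /nrm2 /dot /psub /=; ring.
rewrite /Fx /edge /rot /tA /tB /tC /= (key A) (key B) (key C) -e1 -e2.
move: (nrm2 (psub A c)) => r.
case: A B C c x {e1 e2 key} => [a1 a2] [b1 b2] [c1 c2] [d1 d2] [x1 x2].
rewrite /sdet /det2 /J /nrm2 /dot /psub /padd /pscale /tA /tB /tC /=.
by congr pair; field.
Qed.

Lemma small_pos (a m d s : R) : 0 < a -> 0 <= s -> 0 <= d -> s * (`|m| + d) < a -> 0 < a + s * m.
Proof.
move=> ha hs hd h.
have h1 : - m <= `|m| by rewrite -normrN ler_norm.
have e1 : s * - m <= s * `|m| := ler_wpM2l hs h1.
have e2 : 0 <= s * d := mulr_ge0 hs hd.
rewrite mulrDr in h; rewrite mulrN in e1; lra.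
Qed.

Lemma two_min (d1 d2 : R) : 0 < d1 -> 0 < d2 -> exists2 d, 0 < d & d <= d1 /\ d <= d2.
Proof.
move=> h1 h2; case: (lerP d1 d2) => h.
- by exists d1 => //; split.
- by exists d2 => //; split => //; apply: ltW.
Qed.

Definition mid (a b : point R) : point R := pscale (2%:R)^-1 (padd a b).

Lemma IN t u : 0 < sdet t -> 0 < det2 (psub (tB t) (tA t)) u ->
  exists2 d, 0 < d & forall s, 0 < s -> s < d -> in_tri_int t (padd (mid (tA t) (tB t)) (pscale s u)).
Proof.
move=> hD hu.
set m := mid _ _.
have [ha hb hc] := L_dir t m 1 u.
set ma := La t (padd m u) - La t m.
set mb := Lb t (padd m u) - Lb t m.
have Em : [/\ La t m = sdet t / 2%:R, Lb t m = sdet t / 2%:R & Lc t (padd m u) - Lc t m = det2 (psub (tB t) (tA t)) u].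
  rewrite /m /mid /La /Lb /Lc; case: t {hD hu ha hb hc ma mb m} => [[[a1 a2] [b1 b2]] [c1 c2]]; case: u => [u1 u2].
  rewrite /sdet /det2 /psub /padd /pscale /tA /tB /tC /=; by split; field.
case: Em => Ea Eb Ec.
have hD2 : 0 < sdet t / 2%:R by apply: divr_gt0.
have hpos : 0 < `|ma| + `|mb| + 1.
  by apply: (lt_le_trans ltr01); rewrite lerDr addr_ge0.
exists (sdet t / 2%:R / (`|ma| + `|mb| + 1)); first by apply: divr_gt0.
move=> s hs hsd.
have [ha' hb' hc'] := L_dir t m s u.
have hsd' : s * (`|ma| + `|mb| + 1) < sdet t / 2%:R by rewrite -ltr_pdivlMr.
apply: L_in_int => //.
- rewrite ha' -/ma Ea; apply: (small_pos (d := `|mb| + 1)) => //; first exact: ltW.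
  by apply: addr_ge0. by rewrite addrA.
- rewrite hb' -/mb Eb; apply: (small_pos (d := `|ma| + 1)) => //; first exact: ltW.
  by apply: addr_ge0. by rewrite addrCA addrA.
- rewrite hc' Ec.
  have -> : Lc t m = 0.
    rewrite /m /mid /Lc; case: t {hD hu ha hb hc ma mb m Ea Eb Ec hD2 hpos hsd hsd' ha' hb' hc'} => [[[a1 a2] [b1 b2]] [c1 c2]].
    rewrite /sdet /det2 /psub /padd /pscale /tA /tB /tC /=; by field.
  by rewrite add0r mulr_gt0.
Qed.

Lemma closed_out t p u : 0 < sdet t -> ~ in_tri t p ->
  exists2 d, 0 < d & forall s, 0 < s -> s < d -> ~ in_tri t (padd p (pscale s u)).
Proof.
move=> hD hp.
have [ha hb hc] := L_dir t p 1 u.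
have gen (L : point R -> R) : L p < 0 ->
   (forall s, L (padd p (pscale s u)) = L p + s * (L (padd p u) - L p)) ->
   (forall q, in_tri t q -> 0 <= L q) ->
  exists2 d, 0 < d & forall s, 0 < s -> s < d -> ~ in_tri t (padd p (pscale s u)).
  move=> hL hdir hin.
  set mu := L (padd p u) - L p.
  have hpos : 0 < `|mu| + 1 by apply: (lt_le_trans ltr01); rewrite lerDr.
  exists (- L p / (`|mu| + 1)); first by apply: divr_gt0 => //; rewrite oppr_gt0.
  move=> s hs hsd /hin; rewrite hdir -/mu.
  have hsd' : s * (`|mu| + 1) < - L p by rewrite -ltr_pdivlMr.
  have h1 : mu <= `|mu| by rewrite ler_norm.
  have e1 : s * mu <= s * `|mu| := ler_wpM2l (ltW hs) h1.
  rewrite mulrDr mulr1 in hsd'; lra.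
have : ~ [/\ 0 <= La t p, 0 <= Lb t p & 0 <= Lc t p].
  by case=> h1 h2 h3; apply: hp; apply: L_in.
case: (ltrP (La t p) 0) => h1.
  by move=> _; apply: gen h1 _ _ => [s|q /(in_L hD) []] //; case: (L_dir t p s u).
case: (ltrP (Lb t p) 0) => h2.
  by move=> _; apply: gen h2 _ _ => [s|q /(in_L hD) []] //; case: (L_dir t p s u).
case: (ltrP (Lc t p) 0) => h3.
  by move=> _; apply: gen h3 _ _ => [s|q /(in_L hD) []] //; case: (L_dir t p s u).
by move=> H; case: H; split.
Qed.

Lemma normal_lemma (v n : point R) : dot n v = 0 -> nrm2 n = 1 -> 0 < nrm2 v ->
  (det2 v n < 0 -> pscale (nrm v) n = J v) /\ (0 < det2 v n -> pscale (nrm v) n = pscale (-1) (J v)).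
Proof.
move=> hd hn hv.
have lag : nrm2 v = (det2 v n) ^+ 2.
  have -> : nrm2 v = nrm2 v * nrm2 n by rewrite hn mulr1.
  have -> : nrm2 v * nrm2 n = (det2 v n) ^+ 2 + (dot n v) ^+ 2
    by rewrite /nrm2 /dot /det2; ring.
  by rewrite hd expr0n /= addr0.
rewrite /nrm lag sqrtr_sqr.
case: v n hd hn {hv lag} => [v1 v2] [n1 n2] hd hn; rewrite /nrm2 /dot /= in hd hn.
rewrite /det2 /J /pscale /=.
split => h.
- rewrite ltr0_norm //; congr pair.
  + have -> : - (v1 * n2 - v2 * n1) * n1 = - n2 * (n1 * v1 + n2 * v2) + v2 * (n1 * n1 + n2 * n2) by ring.
    by rewrite hd hn; ring.
  + have -> : - (v1 * n2 - v2 * n1) * n2 = n1 * (n1 * v1 + n2 * v2) - v1 * (n1 * n1 + n2 * n2) by ring.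
    by rewrite hd hn; ring.
- rewrite gtr0_norm //; congr pair.
  + have -> : (v1 * n2 - v2 * n1) * n1 = n2 * (n1 * v1 + n2 * v2) - v2 * (n1 * n1 + n2 * n2) by ring.
    by rewrite hd hn; ring.
  + have -> : (v1 * n2 - v2 * n1) * n2 = - n1 * (n1 * v1 + n2 * v2) + v1 * (n1 * n1 + n2 * n2) by ring.
    by rewrite hd hn; ring.
Qed.

Lemma uniq_flatten_idx (X Y : eqType) (x0 : X) (s : seq X) (f : X -> seq Y) :
  (forall i, (i < size s)%N -> uniq (f (nth x0 s i))) ->
  (forall i j y, (i < size s)%N -> (j < size s)%N -> i <> j ->
      y \in f (nth x0 s i) -> y \in f (nth x0 s j) -> False) ->
  uniq (flatten (map f s)).
Proof.
elim: s => [|x s IH] //= hu hd.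
rewrite cat_uniq; apply/and3P; split.
- exact: (hu 0%N).
- apply/hasPn => y /flatten_mapP [z zs yz]; apply/negP => yx.
  have [j hj Ej] : exists2 j, (j < size s)%N & nth x0 s j = z.
    by exists (index z s); [rewrite index_mem | rewrite nth_index].
  by apply: (hd 0%N j.+1 y) => //=; rewrite Ej.
- apply: IH => [i hi|i j y hi hj hij]; first exact: (hu i.+1).
  by apply: (hd i.+1 j.+1 y) => //; case.
Qed.

Lemma fin_min (P : nat -> R -> Prop) (s : seq nat) :
  (forall j, j \in s -> exists2 d, 0 < d & forall x, 0 < x -> x < d -> P j x) ->
  exists2 d, 0 < d & forall j, j \in s -> forall x, 0 < x -> x < d -> P j x.
Proof.
elim: s => [|j s IH] h.
  by exists 1 => //; rewrite ltr01.
have [d1 h1 H1] := h j (mem_head _ _).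
have [d2 h2 H2] := IH (fun k ks => h k (ltac:(by rewrite inE ks orbT))).
have [d hd [hd1 hd2]] := two_min h1 h2.
exists d => // k; rewrite inE => /orP [/eqP ->|ks] x hx hxd.
- by apply: H1 => //; apply: lt_le_trans hd1.
- by apply: H2 => //; apply: lt_le_trans hd2.
Qed.

Lemma nrm2_gt0 (a b : point R) : a != b -> 0 < nrm2 (psub b a).
Proof.
case: a b => [a1 a2] [b1 b2] hab; rewrite /nrm2 /dot /psub /=.
have h1 : 0 <= (b1 - a1) * (b1 - a1) by rewrite -expr2 sqr_ge0.
have h2 : 0 <= (b2 - a2) * (b2 - a2) by rewrite -expr2 sqr_ge0.
rewrite lt_neqAle addr_ge0 // andbT; apply/eqP => /esym E.
have E1 : (b1 - a1) * (b1 - a1) = 0 by lra.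
have E2 : (b2 - a2) * (b2 - a2) = 0 by lra.
move: E1 E2 => /eqP; rewrite mulf_eq0 orbb subr_eq0 => /eqP E1 /eqP.
rewrite mulf_eq0 orbb subr_eq0 => /eqP E2.
by move: hab; rewrite E1 E2 eqxx.
Qed.

End G.

Section H.
Variable R : rcfType.
Implicit Types (p q u : point R) (t T : triangle R).
Variable Tr : seq (triangle R).
Hypothesis hC : conforming Tr.

Definition T0 : triangle R := (pzero R, pzero R, pzero R).
Definition DD := flatten [seq map (@edge R) (posrot T) | T <- Tr].

Lemma memD e : e \in DD -> exists i t, [/\ (i < size Tr)%N, t \in posrot (nth T0 Tr i) & e = edge t].
Proof.
move=> /flatten_mapP [T hT] /mapP [t ht ->].
exists (index T Tr), t; split => //; first by rewrite index_mem.
by rewrite nth_index.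
Qed.

Lemma Dmem i t : (i < size Tr)%N -> t \in posrot (nth T0 Tr i) -> edge t \in DD.
Proof.
move=> hi ht; apply/flatten_mapP; exists (nth T0 Tr i); first exact: mem_nth.
by apply: map_f.
Qed.

Lemma nondeg i : (i < size Tr)%N -> sdet (nth T0 Tr i) != 0.
Proof. by move=> hi; case: hC => h _; apply: h; apply: mem_nth. Qed.

Lemma pos_of i t : (i < size Tr)%N -> t \in posrot (nth T0 Tr i) -> 0 < sdet t.
Proof. by move=> hi ht; case: (posrot_sdet (nondeg hi) ht). Qed.

Lemma INQ i t u : (i < size Tr)%N -> t \in posrot (nth T0 Tr i) ->
  0 < det2 (psub (tB t) (tA t)) u ->
  exists2 d, 0 < d & forall s, 0 < s -> s < d ->
    in_tri_int (nth T0 Tr i) (padd (mid (tA t) (tB t)) (pscale s u)).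
Proof.
move=> hi ht hu; have [d hd H] := IN (pos_of hi ht) hu.
exists d => // s hs hsd; have [_ h2 _ _] := posrot_same ht; apply/h2; exact: H.
Qed.

Lemma int_tri T q : in_tri_int T q -> in_tri T q.
Proof.
by case=> l1 [l2 [l3 [h1 h2 h3 h4 E]]]; exists l1, l2, l3; split => //; apply: ltW.
Qed.

Lemma G1 i j ti tj : (i < size Tr)%N -> (j < size Tr)%N ->
  ti \in posrot (nth T0 Tr i) -> tj \in posrot (nth T0 Tr j) -> edge ti = edge tj -> i = j.
Proof.
move=> hi hj hti htj E.
case: (eqVneq i j) => // /eqP hij; exfalso.
have [hab _ _] := sdet_distinct (lt0r_neq0 (pos_of hi hti)).
have [EA EB] : tA ti = tA tj /\ tB ti = tB tj by case: E.
pose u : point R := (-(psub (tB ti) (tA ti)).2, (psub (tB ti) (tA ti)).1).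
have hu : 0 < det2 (psub (tB ti) (tA ti)) u.
  have := nrm2_gt0 hab; rewrite /det2 /u /nrm2 /dot /=.
  by move=> h; rewrite mulrN opprK.
have hu' : 0 < det2 (psub (tB tj) (tA tj)) u by rewrite -EA -EB.
have [d1 h1 H1] := INQ hi hti hu.
have [d2 h2 H2] := INQ hj htj hu'.
have [d hd [hd1 hd2]] := two_min h1 h2.
have hs : 0 < d / 2%:R by apply: divr_gt0.
have hsd : d / 2%:R < d by rewrite ltr_pdivrMr // ltr_pMr // ltr1n.
have Hi := H1 _ hs (lt_le_trans hsd hd1).
have Hj := H2 _ hs (lt_le_trans hsd hd2).
rewrite -EA -EB in Hj.
case: hC => _ /(_ i j hi hj) H.
case: (H hij) => /= H' _.
by apply: (H' _); split; [exact: Hi | exact: Hj].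
Qed.

Lemma uniq_edges T : sdet T != 0 -> uniq (map (@edge R) (posrot T)).
Proof.
case: T => [[A B] C] h; have [h1 h2 h3] := sdet_distinct h.
move: h1 h2 h3; rewrite /tA /tB /tC /= => h1 h2 h3.
have h1' : (B == A) = false by rewrite eq_sym; apply/negbTE.
have h2' : (C == B) = false by rewrite eq_sym; apply/negbTE.
have h3' : (A == C) = false by rewrite eq_sym; apply/negbTE.
move/negbTE: h1 => h1; move/negbTE: h2 => h2; move/negbTE: h3 => h3.
rewrite /posrot; case: ifP => _ /=; rewrite /edge /rot /swp /tA /tB /tC /= !inE !xpair_eqE;
  by rewrite ?h1 ?h2 ?h3 ?h1' ?h2' ?h3' ?andbF ?andFb.
Qed.

Lemma uniqD : uniq DD.
Proof.
rewrite /DD; apply: (uniq_flatten_idx (x0 := T0)).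
- by move=> i hi; apply: uniq_edges; apply: nondeg.
- move=> i j y hi hj hij /mapP [ti hti ->] /mapP [tj htj E].
  by apply: hij; apply: (G1 hi hj hti htj E).
Qed.

Lemma Lseg t r : [/\ La t (sg2 r (tA t) (tB t)) = (1 - r) * sdet t,
  Lb t (sg2 r (tA t) (tB t)) = r * sdet t & Lc t (sg2 r (tA t) (tB t)) = 0].
Proof.
have [Ea Eb Ec] := L_aff t r (tA t) (tB t).
have [[a1 a2 a3] [b1 b2 b3] _] := L_vert t.
by rewrite Ea Eb Ec a1 a2 a3 b1 b2 b3 !mulr0 !addr0 add0r.
Qed.

Lemma notvert t r : 0 < sdet t -> 0 < r -> r < 1 -> forall x, x \in vertices t ->
  sg2 r (tA t) (tB t) <> x.
Proof.
move=> hD hr0 hr1 x; have [Ea Eb Ec] := Lseg t r.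
have [[a1 a2 a3] [b1 b2 b3] [c1 c2 c3]] := L_vert t.
have h1 : 0 < r * sdet t by apply: mulr_gt0.
have h2 : 0 < (1 - r) * sdet t by apply: mulr_gt0 => //; rewrite subr_gt0.
rewrite /vertices !inE => /or3P [] /eqP -> E.
- by move: Eb; rewrite E a2; lra.
- by move: Ea; rewrite E b1; lra.
- by move: Ec; rewrite E c3; lra.
Qed.

Lemma Lc_out t r s : Lc t (padd (sg2 r (tA t) (tB t)) (pscale s (J (psub (tB t) (tA t))))) =
  - s * nrm2 (psub (tB t) (tA t)).
Proof.
case: t => [[[a1 a2] [b1 b2]] [c1 c2]].
rewrite /Lc /sg2 /J /nrm2 /dot /det2 /psub /padd /pscale /tA /tB /tC /=; ring.
Qed.

Lemma tri_seg t r : 0 <= r -> r <= 1 -> in_tri t (sg2 r (tA t) (tB t)).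
Proof.
move=> h0 h1; exists (1 - r), r, 0; split => //; first by rewrite subr_ge0.
  by ring.
by apply: pt_eq; rewrite /sg2 /padd /pscale /=; ring.
Qed.

Lemma notin_other i j t r : (i < size Tr)%N -> (j < size Tr)%N -> i <> j ->
  t \in posrot (nth T0 Tr i) -> flip (edge t) \notin DD -> 0 < r -> r < 1 ->
  ~ in_tri (nth T0 Tr j) (sg2 r (tA t) (tB t)).
Proof.
move=> hi hj hij ht hfl hr0 hr1 Hin.
have hD := pos_of hi ht.
have [s1 _ s3 _] := posrot_same ht.
have hTp : in_tri (nth T0 Tr i) (sg2 r (tA t) (tB t)) by apply/s1; apply: tri_seg; apply: ltW.
case: hC => _ /(_ i j hi hj hij) /= [_ G].
case: G => [G|[[v0 [hv0 hv0j Hv]]|[u0 [w0 [huw /andP [hu hw] /andP [hu' hw'] Hs]]]]].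
- by apply: (G _); split; [exact: hTp | exact: Hin].
- have Ep := (Hv _).1 (conj hTp Hin).
  by apply: (notvert hD hr0 hr1 (x := v0)) => //; rewrite s3.
- have [k [hk0 hk1 Ep]] := (Hs _).1 (conj hTp Hin).
  rewrite -s3 in hu; rewrite -s3 in hw.
  have [Ea Eb Ec] := L_aff t k u0 w0.
  have [La1 Lb1 Lc1] := Lseg t r.
  have [[a1 a2 a3] [b1 b2 b3] [c1 c2 c3]] := L_vert t.
  have h1 : 0 < r * sdet t by apply: mulr_gt0.
  have h2 : 0 < (1 - r) * sdet t by apply: mulr_gt0 => //; rewrite subr_gt0.
  have Ep' : sg2 r (tA t) (tB t) = sg2 k u0 w0 by [].
  rewrite -Ep' in Ea Eb Ec.
  have edge_case : u0 \in [:: tA t; tB t] -> w0 \in [:: tA t; tB t] -> False.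
    rewrite !inE => /orP hu0 /orP hw0.
    have [ha hb] : tA t \in vertices (nth T0 Tr j) /\ tB t \in vertices (nth T0 Tr j).
      case: hu0 => /eqP E1; case: hw0 => /eqP E2; move: huw hu' hw';
        rewrite E1 E2 ?eqxx // => _ h h'; by split.
    have hab : tA t != tB t by case: (sdet_distinct (lt0r_neq0 hD)).
    have [t' ht' [E|E]] := posrot_edge (nondeg hj) hab ha hb.
    + by apply: hij; apply: (G1 hi hj ht ht').
    + by move: hfl; rewrite /flip /edge /= -E (Dmem hj ht').
  move: hu hw; rewrite /vertices !inE => /or3P [] /eqP E1 /or3P [] /eqP E2;
    rewrite ?E1 ?E2 in Ea Eb Ec huw edge_case.
  all: try by rewrite eqxx in huw.
  all: try by apply: edge_case; rewrite !inE eqxx ?orbT.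
  + by move: Eb; rewrite Lb1 a2 c2; lra.
  + by move: Ea; rewrite La1 b1 c1; lra.
  + by move: Eb; rewrite Lb1 a2 c2; lra.
  + by move: Ea; rewrite La1 b1 c1; lra.
Qed.

Lemma head_posrot T : head T0 (posrot T) \in posrot T.
Proof. by rewrite /posrot; case: ifP => _; rewrite inE eqxx. Qed.

Lemma OPEN i t r : (i < size Tr)%N -> t \in posrot (nth T0 Tr i) -> flip (edge t) \notin DD ->
  0 < r -> r < 1 ->
  exists2 d, 0 < d & forall s, 0 < s -> s < d ->
    ~ inQ Tr (padd (sg2 r (tA t) (tB t)) (pscale s (J (psub (tB t) (tA t))))).
Proof.
move=> hi ht hfl hr0 hr1.
have hD := pos_of hi ht.
have [s1 _ s3 _] := posrot_same ht.
have hab : tA t != tB t by case: (sdet_distinct (lt0r_neq0 hD)).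
have := @fin_min R (fun j s => ~ in_tri (nth T0 Tr j)
   (padd (sg2 r (tA t) (tB t)) (pscale s (J (psub (tB t) (tA t)))))) (iota 0 (size Tr)).
case.
- move=> j; rewrite mem_iota add0n => /andP [_ hj].
  case: (eqVneq j i) => [->|/eqP hji].
  + exists 1; first by rewrite ltr01.
    move=> s hs _ /s1 /(in_L hD) [_ _]; rewrite Lc_out.
    have := nrm2_gt0 hab => hv.
    have : 0 < s * nrm2 (psub (tB t) (tA t)) by apply: mulr_gt0.
    by rewrite mulNr; lra.
  + have Hn := notin_other hi hj (nesym hji) ht hfl hr0 hr1.
    have ht' := head_posrot (nth T0 Tr j).
    have [s1' _ _ _] := posrot_same ht'.
    have [d hd H] := closed_out (J (psub (tB t) (tA t))) (pos_of hj ht') (fun h => Hn ((s1' _).1 h)).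
    by exists d => // s hs hsd /s1'; apply: H.
- move=> d hd H; exists d => // s hs hsd [T' hT' HT'].
  apply: (H (index T' Tr)) hs hsd _.
  + by rewrite mem_iota add0n index_mem hT'.
  + by rewrite nth_index.
Qed.

Lemma dist_q (a b : point R) r r' s :
  nrm2 (psub (padd (sg2 r' a b) (pscale s (J (psub b a)))) (sg2 r a b)) =
  ((r' - r) ^+ 2 + s ^+ 2) * nrm2 (psub b a).
Proof.
case: a b => [a1 a2] [b1 b2].
rewrite /sg2 /J /nrm2 /dot /psub /padd /pscale /=; ring.
Qed.

Lemma G2 e : e \in DD -> flip e \notin DD -> boundary_edge Tr e.1 e.2.
Proof.
move=> /memD [i [t [hi ht ->]]] hfl; rewrite /edge /=.
have hD := pos_of hi ht.
have [s1 _ s3 _] := posrot_same ht.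
have hab : tA t != tB t by case: (sdet_distinct (lt0r_neq0 hD)).
split.
  exists (nth T0 Tr i); first exact: mem_nth.
  by split => //; rewrite -s3 /vertices !inE eqxx ?orbT.
move=> p [r [hr0 hr1 Ep]].
have Ep' : p = sg2 r (tA t) (tB t) by [].
split.
  by exists (nth T0 Tr i); [exact: mem_nth | apply/s1; rewrite Ep'; apply: tri_seg].
move=> eps heps.
set nv := nrm2 (psub (tB t) (tA t)).
have hnv : 0 < nv by apply: nrm2_gt0.
set h := eps / (nv + eps).
have hne : 0 < nv + eps by apply: addr_gt0.
have hh0 : 0 < h by apply: divr_gt0.
have hh1 : h < 1 by rewrite ltr_pdivrMr // mul1r ltrDr.
have hhnv : h * nv < eps.
  rewrite /h mulrAC ltr_pdivrMr // (mulrDr eps nv eps) ltrDl; exact: mulr_gt0.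
set r' := (1 - h) * r + h / 2%:R.
have hr'0 : 0 < r'.
  have : 0 <= (1 - h) * r by apply: mulr_ge0 => //; rewrite subr_ge0 ltW.
  have : 0 < h / 2%:R by apply: divr_gt0.
  rewrite /r'; lra.
have hr'1 : r' < 1.
  have : (1 - h) * r <= (1 - h) by rewrite -{2}(mulr1 (1 - h)) ler_wpM2l // subr_ge0 ltW.
  rewrite /r'; lra.
have [dl hdl Hd] := OPEN hi ht hfl hr'0 hr'1.
have he2 : 0 < eps / (2%:R * (nv + 1)) by apply: divr_gt0 => //; apply: mulr_gt0 => //; apply: addr_gt0.
have [d1 hd1 [hd1a hd1b]] := two_min hdl ltr01.
have [d hd [hda hdb]] := two_min hd1 he2.
set s := d / 2%:R.
have hs0 : 0 < s by apply: divr_gt0.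
have hsd : s < d by rewrite ltr_pdivrMr // ltr_pMr // ltr1n.
exists (padd (sg2 r' (tA t) (tB t)) (pscale s (J (psub (tB t) (tA t))))).
split; last by apply: Hd => //; apply: lt_le_trans hsd (le_trans hda hd1a).
rewrite Ep' dist_q -/nv.
have hs1 : s <= 1 by apply: ltW; apply: lt_le_trans hsd (le_trans hda hd1b).
have X : (r' - r) ^+ 2 <= h / 4%:R.
  have -> : r' - r = h * (2%:R^-1 - r) by rewrite /r'; field.
  rewrite exprMn.
  have A1 : h ^+ 2 <= h by rewrite expr2 -{3}(mulr1 h) ler_pM2l // ltW.
  have A2 : (2%:R^-1 - r) ^+ 2 <= 4%:R^-1.
    have -> : (2%:R^-1 - r) ^+ 2 = 4%:R^-1 - r * (1 - r) by field.
    by rewrite lerBlDr lerDl; apply: mulr_ge0 => //; rewrite subr_ge0.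
  have A3 : 0 <= (2%:R^-1 - r) ^+ 2 by apply: sqr_ge0.
  have B1 : h ^+ 2 * (2%:R^-1 - r) ^+ 2 <= h * (2%:R^-1 - r) ^+ 2 := ler_wpM2r A3 A1.
  have B2 : h * (2%:R^-1 - r) ^+ 2 <= h * 4%:R^-1 := ler_wpM2l (ltW hh0) A2.
  exact: le_trans B1 B2.
have Y : s ^+ 2 <= s by rewrite expr2 -{3}(mulr1 s) ler_pM2l.
have Z : s * (nv + 1) < eps / 2%:R.
  have : s < eps / (2%:R * (nv + 1)) by apply: lt_le_trans hsd hdb.
  rewrite ltr_pdivlMr; last by apply: mulr_gt0 => //; apply: addr_gt0.
  by rewrite mulrA ltr_pdivlMr // => H; rewrite mulrAC.
have W : ((r' - r) ^+ 2 + s ^+ 2) * nv <= (h / 4%:R + s) * nv.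
  by apply: ler_wpM2r; [apply: ltW | apply: lerD].
apply: (le_lt_trans W).
rewrite mulrDr mulr1 in Z.
have : 0 < s by [].
rewrite mulrDl mulrAC.
lra.
Qed.

Lemma det_nz (v n : point R) : dot n v = 0 -> nrm2 n = 1 -> 0 < nrm2 v -> det2 v n != 0.
Proof.
move=> hd hn hv.
have lag : nrm2 v = (det2 v n) ^+ 2.
  have -> : nrm2 v = nrm2 v * nrm2 n by rewrite hn mulr1.
  have -> : nrm2 v * nrm2 n = (det2 v n) ^+ 2 + (dot n v) ^+ 2
    by rewrite /nrm2 /dot /det2; ring.
  by rewrite hd expr0n /= addr0.
apply/eqP => E; move: hv; by rewrite lag E expr0n /= ltxx.
Qed.

Lemma G3 (a b n : point R) : boundary_edge Tr a b -> unit_outer_normal Tr a b n ->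
  ((a, b) \in DD /\ (b, a) \notin DD /\ pscale (nrm (psub b a)) n = J (psub b a)) \/
  ((b, a) \in DD /\ (a, b) \notin DD /\ pscale (nrm (psub b a)) n = pscale (-1) (J (psub b a))).
Proof.
move=> [[T hT [hab ha hb]] _] [hn1 hdot [dn hdn Hout]].
have hi : (index T Tr < size Tr)%N by rewrite index_mem.
have ET : nth T0 Tr (index T Tr) = T by rewrite nth_index.
have hDor : (a, b) \in DD \/ (b, a) \in DD.
  have [t ht [E|E]] := posrot_edge (nondeg hi) hab (ltac:(by rewrite ET)) (ltac:(by rewrite ET)).
  - by left; rewrite -E; apply: (Dmem hi ht).
  - by right; rewrite -E; apply: (Dmem hi ht).
have hv : 0 < nrm2 (psub b a) by apply: nrm2_gt0.
have hnz := det_nz hdot hn1 hv.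
have [NL1 NL2] := normal_lemma hdot hn1 hv.
have INout (x y : point R) : (x, y) \in DD -> mid x y = mid a b -> 0 < det2 (psub y x) n -> False.
  move=> /memD [i [t [hi' ht [Ex Ey]]]] Em hpos.
  rewrite Ex Ey in Em hpos.
  have [d1 h1 H1] := INQ hi' ht hpos.
  have [d hd [hda hdb]] := two_min h1 hdn.
  have hs0 : 0 < d / 2%:R by apply: divr_gt0.
  have hsd : d / 2%:R < d by rewrite ltr_pdivrMr // ltr_pMr // ltr1n.
  apply: (Hout (d / 2%:R) hs0 (lt_le_trans hsd hdb)).
  exists (nth T0 Tr i); first exact: mem_nth.
  apply: int_tri; rewrite -[pscale _ (padd a b)]/(mid a b) -Em.
  exact: H1 hs0 (lt_le_trans hsd hda).
case: (ltrgt0P (det2 (psub b a) n)) => hs.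
- right.
  have nab : (a, b) \notin DD by apply/negP => H; apply: (INout a b H).
  split; last by split => //; apply: NL2.
  by case: hDor => // H; rewrite H in nab.
- left.
  have nba : (b, a) \notin DD.
    apply/negP => H; apply: (INout b a H).
    + by rewrite /mid; congr pscale; apply: pt_eq; rewrite /padd /= addrC.
    + have -> : det2 (psub a b) n = - det2 (psub b a) n.
        by rewrite /det2 /psub /=; ring.
      by rewrite oppr_gt0.
  split; last by split => //; apply: NL1.
  by case: hDor => // H; rewrite H in nba.
- by rewrite hs eqxx in hnz.
Qed.

End H.

Unset Implicit Arguments. Set Strict Implicit.

Section M.
Variable R : rcfType.

Lemma fst_sum (I : Type) (s : seq I) (F : I -> point R) : (\sum_(i <- s) F i).1 = \sum_(i <- s) (F i).1.
Proof. elim: s => [|i s IH]; by rewrite ?big_nil ?big_cons //= IH. Qed.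
Lemma snd_sum (I : Type) (s : seq I) (F : I -> point R) : (\sum_(i <- s) F i).2 = \sum_(i <- s) (F i).2.
Proof. elim: s => [|i s IH]; by rewrite ?big_nil ?big_cons //= IH. Qed.

Lemma sum_mulB (I : Type) (s : seq I) (a b c : I -> R) :
  \sum_(i <- s) a i * (b i - c i) = \sum_(i <- s) a i * b i - \sum_(i <- s) a i * c i.
Proof. by rewrite -sumrB; apply: eq_bigr => i _; rewrite mulrBr. Qed.

Lemma cent_aux (s : seq (triangle R)) (w c g : triangle R -> R) (Q y : R) :
  Q = \sum_(i <- s) w i -> Q != 0 -> y = Q^-1 * \sum_(i <- s) w i * g i ->
  \sum_(i <- s) w i * (c i - g i) = \sum_(i <- s) w i * (c i - y).
Proof.
move=> hQ hQ0 hy; rewrite !sum_mulB; congr (_ - _).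
by rewrite -mulr_suml -hQ hy mulrA mulfV // mul1r.
Qed.

Lemma pscale_mul (k l : R) (n : point R) : pscale (k * l) n = pscale l (pscale k n).
Proof. by apply: pt_eq; rewrite /pscale /=; ring. Qed.

Lemma Fx_flip (x : point R) (e : point R * point R) : Fx x (flip e) = - Fx x e.
Proof. by apply: pt_eq; rewrite /Fx /flip /J /pscale /psub /=; ring. Qed.

Lemma flipK : involutive (@flip R).
Proof. by case. Qed.

Lemma S0 (S : point R) : S = - S -> S = 0.
Proof.
move=> E; apply: pt_eq.
- have : S.1 = - S.1 by rewrite {1}E.
  by rewrite /=; lra.
- have : S.2 = - S.2 by rewrite {1}E.
  by rewrite /=; lra.
Qed.

Lemma tri_sum (T : triangle R) c x : sdet T != 0 -> is_circumcenter T c ->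
  pscale (tarea T) (psub c x) = \sum_(e <- map (@edge R) (posrot T)) Fx x e.
Proof.
move=> hT hc; rewrite /posrot /tarea; case: ifP => hp; rewrite /= !big_cons big_nil addr0.
- by rewrite gtr0_norm //; symmetry; apply: (tri_id x hc).
- have hn : sdet T < 0 by rewrite lt_neqAle hT /= leNgt hp.
  have [_ _ _ h4] := same_swp (same_refl T).
  rewrite ltr0_norm // -sdet_swp -(tri_id x (h4 _ hc)).
  case: T {hT hc hp hn h4} => [[A B] C].
  by rewrite /= /edge /swp /rot /tA /tB /tC /= [Fx x (C, B) + _]addrC.
Qed.

End M.

Theorem mainTheorem12 (R : rcfType) (Tr : seq (triangle R))
  (E : seq (point R * point R))
  (cc : triangle R -> point R) (nQ : point R -> point R -> point R) :
  Tr <> [::] ->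
  conforming Tr ->
  enumerates_boundary_edges Tr E ->
  (forall T, T \in Tr -> is_circumcenter T (cc T)) ->
  (forall e, e \in E -> unit_outer_normal Tr e.1 e.2 (nQ e.1 e.2)) ->
  psum Tr (fun T => pscale (tarea T) (psub (cc T) (tcentroid T))) =
  psum E (fun e =>
    pscale (nrm (psub e.2 e.1) *
            ((nrm2 (psub e.1 (Qcentroid Tr)) + nrm2 (psub e.2 (Qcentroid Tr))) / 4%:R))
           (nQ e.1 e.2)).
Proof.
move=> hne hC [hE1 hE2] hcc hn.
set x := Qcentroid Tr.
pose F := Fx x.
pose D := DD Tr.
pose orient (e : point R * point R) := if e \in D then e else flip e.
pose BB := [seq e <- D | flip e \notin D].
have Hterm : forall e, e \in E -> orient e \in BB /\
    pscale (nrm (psub e.2 e.1) * ((nrm2 (psub e.1 x) + nrm2 (psub e.2 x)) / 4%:R)) (nQ e.1 e.2)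
    = F (orient e).
  case=> a b he; rewrite /=.
  case: (G3 hC (hE1 _ he) (hn _ he)) => [[h1 [h2 h3]]|[h1 [h2 h3]]].
  - rewrite /orient h1; split; first by rewrite mem_filter h1 h2.
    by rewrite pscale_mul h3.
  - rewrite /orient (negbTE h2); split; first by rewrite mem_filter /= h1 h2.
    rewrite pscale_mul h3; apply: pt_eq; rewrite /F /Fx /flip /J /pscale /psub /=; ring.
have uD : uniq D := uniqD hC.
have Hperm : perm_eq (map orient E) BB.
  rewrite /perm_eq; apply/allP => o _; apply/eqP.
  rewrite count_map.
  case: (boolP (o \in BB)) => hoB.
  - rewrite (count_uniq_mem _ (filter_uniq _ uD)) hoB.
    move: hoB; rewrite mem_filter => /andP [hfl hoD].
    rewrite (@eq_in_count _ _ (fun e => (e == (o.1, o.2)) || (e == (o.2, o.1)))).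
    + by rewrite hE2 //; case: o hfl hoD => a b hfl hoD; apply: (G2 hC hoD hfl).
    + move=> e he /=; rewrite -surjective_pairing.
      have -> : (o.2, o.1) = flip o by [].
      rewrite /orient; case: ifP => heD.
      * case: (eqVneq e o) => // neo; rewrite orFb; apply/esym/negbTE.
        by apply/eqP => E'; move: hfl; rewrite -E' heD.
      * case: (eqVneq e o) => [E'|neo]; first by move: heD; rewrite E' hoD.
        rewrite orFb; case: (eqVneq e (flip o)) => [->|nef]; first by rewrite flipK eqxx.
        by apply/negbTE; apply/eqP => E'; move: nef; rewrite -E' flipK eqxx.
  - move/count_memPn: (hoB) => ->.
    rewrite (@eq_in_count _ _ pred0) ?count_pred0 // => e he /=.
    apply/negbTE; apply/eqP => E'; move: hoB; rewrite -E'.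
    by rewrite (Hterm e he).1.
have Hcanc : \sum_(e <- D) F e = \sum_(e <- BB) F e.
  rewrite (bigID (fun e => flip e \in D)) /= big_filter.
  set I := [seq e <- D | flip e \in D].
  have -> : \sum_(i <- D | flip i \in D) F i = \sum_(i <- I) F i by rewrite big_filter.
  suff -> : \sum_(i <- I) F i = 0 by rewrite add0r.
  apply: S0.
  have hp : perm_eq I (map (@flip R) I).
    apply: uniq_perm; first exact: filter_uniq.
      by rewrite (map_inj_uniq (can_inj (@flipK R))); apply: filter_uniq.
    move=> y; rewrite -{2}(@flipK R y) (mem_map (can_inj (@flipK R))) !mem_filter flipK.
    by rewrite andbC.
  rewrite {1}(perm_big _ hp) big_map -sumrN.
  by apply: eq_bigr => i _; rewrite /F Fx_flip.
have Hflat : \sum_(T <- Tr) \sum_(e <- map (@edge R) (posrot T)) F e = \sum_(e <- D) F e.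
  by rewrite /D /DD big_flatten big_map.
have Hcent : psum Tr (fun T => pscale (tarea T) (psub (cc T) (tcentroid T))) =
             \sum_(T <- Tr) pscale (tarea T) (psub (cc T) x).
  have hQ : Qarea Tr != 0.
    case: Tr hne hC {hcc hn hE1 hE2 x F D orient BB Hterm uD Hperm Hcanc Hflat} => [//|T s] _ hC.
    rewrite /Qarea big_cons; apply: lt0r_neq0.
    have h1 : 0 < tarea T.
      rewrite /tarea; apply: divr_gt0 => //; rewrite normr_gt0.
      by case: hC => h _; apply: h; rewrite mem_head.
    have h2 : 0 <= \sum_(T <- s) tarea T by apply: sumr_ge0 => i _; apply: divr_ge0.
    by apply: (lt_le_trans h1); rewrite lerDl.
  rewrite psumE; apply: pt_eq; rewrite ?fst_sum ?snd_sum.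
  - apply: (@cent_aux R Tr (fun T => tarea T) (fun T => (cc T).1) (fun T => (tcentroid T).1) (Qarea Tr)) => //.
    by rewrite /x /Qcentroid psumE /pscale fst_sum.
  - apply: (@cent_aux R Tr (fun T => tarea T) (fun T => (cc T).2) (fun T => (tcentroid T).2) (Qarea Tr)) => //.
    by rewrite /x /Qcentroid psumE /pscale snd_sum.
have Htri : {in Tr, forall T, pscale (tarea T) (psub (cc T) x) = \sum_(e <- map (@edge R) (posrot T)) F e}.
  move=> T hT; apply: tri_sum; last exact: hcc.
  by case: hC => h _; apply: h.
rewrite Hcent (eq_big_seq _ Htri).
rewrite Hflat Hcanc -(perm_big _ Hperm) big_map psumE.
by apply: eq_big_seq => e he; rewrite (Hterm e he).2.
Qed.
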